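(* Let $m$ be an even positive integer, let $q,k$ be positive integers, and put $n=q(k-1)+1$. Let ${\bf h}=(h_0,h_1,\dots,h_{qm(k-1)})^\top\in\mathbb{R}^{qm(k-1)+1}$ (note $qm(k-1)+1=m(n-1)+1$). Let $\mathcal{H}_m$ be the $m^{\rm th}$-order $n$-dimensional Hankel tensor with entries $(\mathcal{H}_m)_{i_1\dots i_m}=h_{i_1+\dots+i_m}$ ($0\le i_j\le n-1$), and let $\mathcal{H}_{qm}$ be the $(qm)^{\rm th}$-order $k$-dimensional Hankel tensor with entries $(\mathcal{H}_{qm})_{i_1\dots i_{qm}}=h_{i_1+\dots+i_{qm}}$ ($0\le i_j\le k-1$). Then: (i) if $\mathcal{H}_m$ is positive semi-definite (resp. positive definite, negative semi-definite, negative definite), then $\mathcal{H}_{qm}$ is positive semi-definite (resp. positive definite, negative semi-definite, negative definite); (ii) if $\mathcal{H}_m$ is an SOS tensor, then $\mathcal{H}_{qm}$ is an SOS tensor, and the SOS rank of $\mathcal{H}_{qm}$ is no larger than the SOS rank of $\mathcal{H}_m$.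
   Context: For a real $m^{\rm th}$-order $n$-dimensional tensor $\mathcal{T}$ with $m$ even, $\mathcal{T}{\bf x}^m=\sum_{i_1,\dots,i_m}\mathcal{T}_{i_1\dots i_m}x_{i_1}\cdots x_{i_m}$. $\mathcal{T}$ is positive semi-definite (positive definite, negative semi-definite, negative definite) if $\mathcal{T}{\bf x}^m\ge 0$ ($>0$, $\le 0$, $<0$) for all nonzero ${\bf x}\in\mathbb{R}^n$. $\mathcal{T}$ is an SOS tensor if the polynomial $\mathcal{T}{\bf x}^m$ is a sum of squares of real polynomials; its SOS rank is the minimum number of squares in such a representation. *)

(* Defs.v *)
From HB Require Import structures.
From mathcomp Require Import all_boot all_order all_algebra.
From mathcomp Require Import mpoly.
Set Implicit Arguments. Unset Strict Implicit. Unset Printing Implicit Defensive.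
Import Order.TTheory GRing.Theory Num.Theory.
Local Open Scope ring_scope.

Definition tensor (R : Type) (m n : nat) := {ffun m.-tuple 'I_n -> R}.

Section Tensors.
Variables (R : realFieldType) (m n : nat).

Definition tapply (T : tensor R m n) (x : 'rV[R]_n) : R :=
  \sum_(t : m.-tuple 'I_n) T t * \prod_(j < m) x 0 (tnth t j).

Definition tpoly (T : tensor R m n) : {mpoly R[n]} :=
  \sum_(t : m.-tuple 'I_n) T t *: \prod_(j < m) 'X_(tnth t j).

Definition psd_tensor (T : tensor R m n) : Prop := forall x, 0 <= tapply T x.
Definition pd_tensor (T : tensor R m n) : Prop := forall x, x != 0 -> 0 < tapply T x.
Definition nsd_tensor (T : tensor R m n) : Prop := forall x, tapply T x <= 0.
Definition nd_tensor (T : tensor R m n) : Prop := forall x, x != 0 -> tapply T x < 0.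

Definition sos_with (T : tensor R m n) (r : nat) : Prop :=
  exists s : seq {mpoly R[n]}, size s = r /\ tpoly T = \sum_(p <- s) p ^+ 2.

Definition sos_tensor (T : tensor R m n) : Prop := exists r, sos_with T r.

Definition is_sos_rank (T : tensor R m n) (r : nat) : Prop :=
  sos_with T r /\ forall r', sos_with T r' -> (r <= r')%N.

Definition hankel (h : nat -> R) : tensor R m n :=
  [ffun t : m.-tuple 'I_n => h (\sum_(j < m) (tnth t j : nat))%N].

End Tensors.

(* Main.v *)
Require Import Defs.
From mathcomp Require Import all_boot all_order all_algebra.
From mathcomp Require Import mpoly.
Import Order.TTheory GRing.Theory Num.Theory.
Local Open Scope ring_scope.

Section Key.
Variable S : comNzRingType.

Lemma exp_sum_poly n m (x : 'I_n -> S) :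
 (\sum_(i<n) x i *: 'X^i : {poly S}) ^+ m =
 \sum_(t : m.-tuple 'I_n) (\prod_(j<m) x (tnth t j)) *: 'X^(\sum_(j<m) (tnth t j : nat)).
Proof.
rewrite -[m in LHS]card_ord -prodr_const bigA_distr_bigA /=.
rewrite (reindex (fun t : m.-tuple 'I_n => [ffun j => tnth t j])) /=; last first.
  exists (fun f : {ffun 'I_m -> 'I_n} => [tuple f j | j < m]) => [t _|f _].
    by apply: eq_from_tnth => j; rewrite tnth_mktuple ffunE.
  by apply/ffunP => j; rewrite !ffunE tnth_mktuple.
apply: eq_bigr => t _.
under eq_bigr do rewrite ffunE -mul_polyC.
rewrite big_split /= -rmorph_prod prodrXr mul_polyC.
by [].
Qed.

Definition Lh (g : nat -> S) N (p : {poly S}) := \sum_(s < N) g s * p`_s.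

Lemma Lh_sum (g : nat -> S) N (I : finType) (c : I -> S) (d : I -> nat) :
  (forall i, d i < N)%N ->
  Lh g N (\sum_i c i *: 'X^(d i)) = \sum_i g (d i) * c i.
Proof.
move=> dN; rewrite /Lh.
under eq_bigr do rewrite coef_sum mulr_sumr.
rewrite exchange_big /=; apply: eq_bigr => i _.
rewrite (bigD1 (Ordinal (dN i))) //= coefZ coefXn eqxx mulr1 big1 ?addr0 //.
move=> s /eqP ne; rewrite coefZ coefXn.
case: eqP => [e|]; last by rewrite mulr0 mulr0.
by exfalso; apply: ne; apply: val_inj.
Qed.

Lemma key (g : nat -> S) n m (x : 'I_n -> S) N : (m * n < N)%N ->
  \sum_(t : m.-tuple 'I_n) g (\sum_(j<m) (tnth t j : nat))%N * \prod_(j<m) x (tnth t j)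
  = Lh g N ((\sum_(i<n) x i *: 'X^i) ^+ m).
Proof.
move=> mN; rewrite exp_sum_poly Lh_sum // => t.
apply: leq_ltn_trans mN.
rewrite -[X in (_ <= X * _)%N]card_ord -sum_nat_const.
by apply: leq_sum => j _; apply: ltnW.
Qed.

Lemma poly_sum_coef (p : {poly S}) n : (size p <= n)%N ->
  \sum_(i < n) p`_i *: 'X^i = p.
Proof.
move=> sp; rewrite -poly_def; apply/polyP => i; rewrite coef_poly.
case: ltnP => // ni; rewrite nth_default //; exact: leq_trans ni.
Qed.

Lemma size_Py_pow q k (y : 'I_k -> S) : (0 < k)%N ->
  (size ((\sum_(j<k) y j *: 'X^j : {poly S}) ^+ q) <= (q * (k - 1)).+1)%N.
Proof.
move=> k0.
apply: leq_trans (size_poly_exp_leq _ _) _; rewrite ltnS mulnC leq_mul2l.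
apply/orP; right; rewrite -subn1 leq_sub2r //.
apply: (big_ind (fun p : {poly S} => size p <= k)%N).
- by rewrite size_poly0.
- move=> p1 p2 h1 h2; apply: leq_trans (size_polyD _ _) _; by rewrite geq_max h1 h2.
- move=> j _; apply: leq_trans (size_scale_leq _ _) _; by rewrite size_polyXn.
Qed.


Lemma key2 (g : nat -> S) q m k (y : 'I_k -> S) : (0 < k)%N ->
  let n := (q * (k - 1)).+1 in
  let lf := fun i : 'I_n => ((\sum_(j<k) y j *: 'X^j : {poly S}) ^+ q)`_i in
  \sum_(t : (q * m).-tuple 'I_k) g (\sum_(j < q * m) (tnth t j : nat))%N * \prod_(j < q * m) y (tnth t j)
  = \sum_(t : m.-tuple 'I_n) g (\sum_(j<m) (tnth t j : nat))%N * \prod_(j<m) lf (tnth t j).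
Proof.
move=> k0 n lf.
set N := (q * m * k + m * n).+1.
rewrite (@key g k (q * m) y N) ?(@key g n m lf N); last 2 first.
- by rewrite /N ltnS leq_addl.
- by rewrite /N ltnS leq_addr.
congr (Lh g N _); rewrite exprM; congr (_ ^+ m).
rewrite /lf poly_sum_coef //.
exact: size_Py_pow.
Qed.

End Key.

Theorem theorem1 (R : realFieldType) (m q k : nat) (h : nat -> R) :
  (0 < m)%N -> ~~ odd m -> (0 < q)%N -> (0 < k)%N ->
  let n := (q * (k - 1)).+1 in
  let Hm := hankel m n h in
  let Hqm := hankel (q * m) k h in
  ((psd_tensor Hm -> psd_tensor Hqm) /\
   (pd_tensor Hm -> pd_tensor Hqm) /\
   (nsd_tensor Hm -> nsd_tensor Hqm) /\
   (nd_tensor Hm -> nd_tensor Hqm)) /\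
  (sos_tensor Hm ->
     sos_tensor Hqm /\
     forall r1 r2, is_sos_rank Hm r1 -> is_sos_rank Hqm r2 -> (r2 <= r1)%N).
Proof.
move=> m0 me q0 k0 n Hm Hqm.
pose Py (y : 'rV[R]_k) := (\sum_(j<k) y 0 j *: 'X^j : {poly R}).
pose xv (y : 'rV[R]_k) := \row_(i < n) ((Py y) ^+ q)`_i.
have Ta : forall y, tapply Hqm y = tapply Hm (xv y).
  move=> y; rewrite /tapply /Hm /Hqm.
  under eq_bigr do rewrite ffunE.
  under [RHS]eq_bigr do rewrite ffunE.
  apply: etrans (@key2 R h q m k (fun j => y 0 j) k0) _.
  apply: eq_bigr => t _; congr (_ * _); apply: eq_bigr => j _; by rewrite mxE.
have Nz : forall y, y != 0 -> xv y != 0.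
  move=> y; apply: contraNneq => /rowP xz.
  have P0 : Py y ^+ q = 0.
    rewrite -(@poly_sum_coef _ (Py y ^+ q) n); last exact: size_Py_pow.
    apply: big1 => i _; have := xz i; rewrite !mxE => ->; by rewrite scale0r.
  move/eqP: P0; rewrite expf_eq0 q0 /= => /eqP Py0.
  apply/eqP/rowP => j; rewrite mxE.
  have <- : (Py y)`_j = y 0 j.
    rewrite /Py coef_sum (bigD1 j) //= coefZ coefXn eqxx mulr1 big1 ?addr0 //.
    move=> i ne; rewrite coefZ coefXn; case: eqP => [/val_inj e|]; last by rewrite mulr0.
    by rewrite e eqxx in ne.
  by rewrite Py0 coef0.
have SOS : forall r, sos_with Hm r -> sos_with Hqm r.
  move=> r [s [sz e]].
  pose lt := [tuple ((\sum_(j<k) 'X_j *: 'X^j : {poly {mpoly R[k]}}) ^+ q)`_i | i < n].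
  exists (map (comp_mpoly lt) s); split; first by rewrite size_map.
  have -> : tpoly Hqm = comp_mpoly lt (tpoly Hm).
    rewrite /tpoly raddf_sum /=.
    transitivity (\sum_(t : (q * m).-tuple 'I_k)
       (h (\sum_(j < q * m) (tnth t j : nat))%N)%:MP * \prod_(j < q * m) 'X_(tnth t j)).
      by apply: eq_bigr => t _; rewrite ffunE mul_mpolyC.
    apply: etrans (@key2 _ (fun s => (h s)%:MP) q m k (fun j => 'X_j) k0) _.
    apply: eq_bigr => t _; rewrite comp_mpolyZ rmorph_prod /= ffunE -mul_mpolyC.
    congr (_ * _); apply: eq_bigr => j _.
    by rewrite comp_mpolyXU -tnth_nth tnth_mktuple.
  rewrite e rmorph_sum big_map; apply: eq_bigr => p _; by rewrite rmorphXn.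
split.
  split; first by move=> H y; rewrite Ta.
  split; first by move=> H y y0; rewrite Ta; apply: H; exact: Nz.
  split; first by move=> H y; rewrite Ta.
  by move=> H y y0; rewrite Ta; apply: H; exact: Nz.
move=> [r Hr]; split; first by exists r; apply: SOS.
move=> r1 r2 [h1 _] [_ h2]; exact: h2 _ (SOS _ h1).
Qed.
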